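(* Let $A=(a_{ij})_{i,j=1}^n$ be the symmetric, entrywise nonnegative weighted adjacency matrix of an undirected graph on $n$ nodes, with degrees $d_i=\sum_j a_{ij}$ and total weight $m=\frac12\sum_{ij}a_{ij}>0$. Let $r\ge 1$ and $1\le k\le r$ be integers, and let $V=[v_1,\dots,v_n]$ with each $v_j\in\mathbb{R}^r$. Fix an index $i$ and the vectors $v_j$, $j\neq i$, and consider the subproblem $$\text{maximize}_{v_i}\; Q(v_i)\quad\text{s.t.}\quad v_i\in\mathbb{R}_+^r,\ \|v_i\|=1,\ \operatorname{card}(v_i)\le k,$$ where $Q(V)=\frac{1}{2m}\sum_{i,j}\left[a_{ij}-\frac{d_id_j}{2m}\right]v_i^Tv_j$ and $Q(v_i)$ denotes $Q$ as a function of $v_i$ alone with all other $v_j$ fixed. Let $q=\nabla Q(v_i):=\frac{1}{2m}\sum_{j\neq i}\left(a_{ij}-\frac{d_id_j}{2m}\right)v_j$. Then an optimal solution of the subproblem is $v_i=g/\|g\|$, where $$g=\begin{cases} e(t)\ \text{for a coordinate } t \text{ maximizing } q_t, & \text{if } q\le 0 \text{ (entrywise)},\\ \operatorname{top}_k^+(q), & \text{otherwise.}\end{cases}$$ (In the case $q\le 0$, if several $t$ attain the maximum of $q_t$, one chooses among them the $t$ with maximum $(v_i)_t$ for the previous value of $v_i$.)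
   Context: $\|\cdot\|$ is the Euclidean norm; $\operatorname{card}(v)$ is the number of nonzero entries of $v$; $e(t)$ is the standard basis vector of coordinate $t$ in $\mathbb{R}^r$. For $q\in\mathbb{R}^r$, $\operatorname{top}_k^+(q)$ is the vector of the same shape that keeps the $k$ largest coordinates of $q$ when they are nonnegative and sets all other coordinates (including negative ones among the top $k$) to zero; e.g. $\operatorname{top}_2^+((-1,3))=(0,3)$ and $\operatorname{top}_1^+((-1,-2))=(0,0)$. Note that the term of $Q$ involving $v_i^Tv_i$ is constant on the feasible set since $\|v_i\|=1$. *)

(* Defs.v *)
From HB Require Import structures.
From mathcomp Require Import all_boot all_order all_algebra.
Set Implicit Arguments. Unset Strict Implicit. Unset Printing Implicit Defensive.
Import Order.TTheory GRing.Theory Num.Theory.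
Local Open Scope ring_scope.

Section Defs.
Variables (R : rcfType) (n r : nat).

Definition dotv (u v : 'rV[R]_r) : R := \sum_(t < r) u 0 t * v 0 t.
Definition normv (u : 'rV[R]_r) : R := Num.sqrt (dotv u u).

Definition cardv (u : 'rV[R]_r) : nat := #|[set t : 'I_r | u 0 t != 0]|.

Definition ebasis (t : 'I_r) : 'rV[R]_r := \row_(s < r) (s == t)%:R.

Definition deg (A : 'M[R]_n) (i : 'I_n) : R := \sum_(j < n) A i j.
Definition totw (A : 'M[R]_n) : R := (\sum_(i < n) \sum_(j < n) A i j) / 2.

Definition Qobj (A : 'M[R]_n) (V : 'I_n -> 'rV[R]_r) : R :=
  (2 * totw A)^-1 * \sum_(i < n) \sum_(j < n)
     (A i j - deg A i * deg A j / (2 * totw A)) * dotv (V i) (V j).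

Definition upd (V : 'I_n -> 'rV[R]_r) (i : 'I_n) (x : 'rV[R]_r) : 'I_n -> 'rV[R]_r :=
  fun j => if j == i then x else V j.

Definition gradq (A : 'M[R]_n) (V : 'I_n -> 'rV[R]_r) (i : 'I_n) : 'rV[R]_r :=
  (2 * totw A)^-1 *: \sum_(j < n | j != i)
     (A i j - deg A i * deg A j / (2 * totw A)) *: V j.

Definition feasible (k : nat) (x : 'rV[R]_r) : Prop :=
  (forall t, 0 <= x 0 t) /\ normv x = 1 /\ (cardv x <= k)%N.

(* g = top_k^+(q): there is a set S of k coordinates holding the k largest
   values of q (ties broken arbitrarily); g keeps q_t for t in S with q_t >= 0
   and is zero elsewhere. *)
Definition is_topk_plus (k : nat) (q g : 'rV[R]_r) : Prop :=
  exists S : {set 'I_r},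
    #|S| = k /\
    (forall s u, s \in S -> u \notin S -> q 0 u <= q 0 s) /\
    (forall t, g 0 t = if (t \in S) && (0 <= q 0 t) then q 0 t else 0).

End Defs.

(* Main.v *)
Require Import Defs.
From HB Require Import structures.
From mathcomp Require Import all_boot all_order all_algebra.
From mathcomp Require Import ring lra.
Import Order.TTheory GRing.Theory Num.Theory.
Local Open Scope ring_scope.

Section H.
Variables (R : rcfType) (n r : nat).
Implicit Types (u v x : 'rV[R]_r).

Lemma dotvC u v : dotv u v = dotv v u.
Proof. by apply: eq_bigr => t _; rewrite mulrC. Qed.

Lemma dotvZl a u v : dotv (a *: u) v = a * dotv u v.
Proof. rewrite /dotv mulr_sumr; apply: eq_bigr => t _; by rewrite mxE mulrA. Qed.

Lemma dotvZr a u v : dotv u (a *: v) = a * dotv u v.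
Proof. by rewrite dotvC dotvZl dotvC. Qed.

Lemma dotv_sum x (P : pred 'I_n) (c : 'I_n -> R) (W : 'I_n -> 'rV[R]_r) :
  dotv x (\sum_(j | P j) c j *: W j) = \sum_(j | P j) c j * dotv x (W j).
Proof.
rewrite /dotv.
under eq_bigr => t _ do rewrite summxE mulr_sumr.
rewrite exchange_big /=; apply: eq_bigr => j _.
rewrite mulr_sumr; apply: eq_bigr => t _; rewrite mxE; lra.
Qed.

Lemma dotv_ge0 u : 0 <= dotv u u.
Proof. by apply: sumr_ge0 => t _; rewrite -expr2 sqr_ge0. Qed.

Lemma normv_dot u : normv u = 1 -> dotv u u = 1.
Proof. by move=> h; rewrite -(sqr_sqrtr (dotv_ge0 u)) -/(normv u) h expr1n. Qed.

Lemma dotv_e t u : dotv (ebasis R t) u = u 0 t.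
Proof.
rewrite /dotv (bigD1 t) //= big1 => [|s st]; rewrite !mxE ?eqxx.
  by rewrite mul1r addr0.
by rewrite (negbTE st) mul0r.
Qed.

Lemma entry_le1 x t : (forall s, 0 <= x 0 s) -> dotv x x = 1 -> x 0 t <= 1.
Proof.
move=> h0 h1.
have : x 0 t * x 0 t <= 1.
  rewrite -h1 /dotv (bigD1 t) //= lerDl; apply: sumr_ge0 => s _; rewrite -expr2 sqr_ge0 //.
have := h0 t; nra.
Qed.

End H.
Arguments dotvC {R r}. Arguments dotvZl {R r}. Arguments dotvZr {R r}.
Arguments dotv_sum {R n r}. Arguments dotv_ge0 {R r}. Arguments normv_dot {R r}.
Arguments dotv_e {R r}. Arguments entry_le1 {R r}.
Section H2.
Variables (R : rcfType) (n r : nat).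

Lemma Qobj_upd (A : 'M[R]_n) (V : 'I_n -> 'rV[R]_r) (i : 'I_n) (x : 'rV[R]_r) :
  A^T = A ->
  let B a b := A a b - deg A a * deg A b / (2 * totw A) in
  Qobj A (upd V i x) = (2 * totw A)^-1 * (B i i * dotv x x +
     \sum_(a < n | a != i) \sum_(b < n | b != i) B a b * dotv (V a) (V b))
     + 2 * dotv x (gradq A V i).
Proof.
move=> hA B.
have hB a b : B a b = B b a.
  rewrite /B -{1}hA mxE; congr (_ - _); by rewrite (mulrC (deg A b)).
rewrite /gradq dotvZr dotv_sum /Qobj /upd (bigD1 i) //= (bigD1 i) //= eqxx.
set S1 := \sum_(j < n | j != i) _.
set S2 := \sum_(a < n | a != i) _.
set S3 := \sum_(a < n | a != i) _.
have -> : S1 = \sum_(j < n | j != i) B i j * dotv x (V j).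
  by apply: eq_bigr => j /negbTE ->.
have -> : S2 = \sum_(a < n | a != i) (B i a * dotv x (V a) +
     \sum_(b < n | b != i) B a b * dotv (V a) (V b)).
  apply: eq_bigr => a /negbTE ha; rewrite (bigD1 i) //= eqxx ha hB dotvC; congr (_ + _).
  by apply: eq_bigr => b /negbTE ->.
rewrite big_split /=.
set T1 := \sum_(j < n | j != i) _.
set T2 := \sum_(a < n | a != i) \sum_(b < n | b != i) _.
rewrite -/(B i i).
have -> : S3 = T2 by []. ring.
Qed.
End H2.
Theorem proposition1 (R : rcfType) (n r k : nat) (A : 'M[R]_n)
    (V : 'I_n -> 'rV[R]_r) (i : 'I_n) :
  A^T = A ->
  (forall a b, 0 <= A a b) ->
  0 < totw A ->
  (1 <= r)%N -> (1 <= k)%N -> (k <= r)%N ->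
  let q := gradq A V i in
  forall g : 'rV[R]_r,
    (if [forall t, q 0 t <= 0] then
       (exists t : 'I_r,
          (forall s, q 0 s <= q 0 t) /\
          (forall s, q 0 s = q 0 t -> V i 0 s <= V i 0 t) /\
          g = ebasis R t)
     else is_topk_plus k q g) ->
    let vopt := (normv g)^-1 *: g in
    feasible k vopt /\
    (forall x, feasible k x -> Qobj A (upd V i x) <= Qobj A (upd V i vopt)).
Proof.
move=> hA hA0 hm hr hk hkr q g Hg vopt.
suff [Hf Hopt] : feasible k vopt /\ forall x, feasible k x -> dotv x q <= dotv vopt q.
  split => // x Hx.
  rewrite (@Qobj_upd R n r A V i x hA) (@Qobj_upd R n r A V i vopt hA) (normv_dot _ Hx.2.1) (normv_dot _ Hf.2.1) -/q.
  have := Hopt x Hx; lra.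
case: ifP Hg => [hall [t [ht1 [_ eg]]] | hnall [S [hS [hSmax hg]]]].
  have hn1 : normv (ebasis R t) = 1 by rewrite /normv dotv_e mxE eqxx sqrtr1.
  rewrite /vopt eg hn1 invr1 scale1r; split.
    split; first by move=> s; rewrite mxE ler0n.
    split => //.
    rewrite /cardv; apply: (leq_trans _ hk); apply: (@leq_trans #|[set t]|); last by rewrite cards1.
    apply: subset_leq_card; apply/subsetP => s; rewrite !inE mxE.
    by case: (s == t) => //=; rewrite mulr0n eqxx.
  move=> x [hx0 [hxn hxc]]; have d1 := normv_dot _ hxn.
  rewrite dotv_e.
  have hqt : q 0 t <= 0 by exact: (forallP hall) t.
  rewrite -[q 0 t]mul1r -d1 /dotv mulr_suml; apply: ler_sum => s _.
  move: (entry_le1 x s hx0 d1) (hx0 s) (ht1 s) => h3 h2 h1.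
  have ha : x 0 s * q 0 s <= x 0 s * q 0 t by rewrite ler_wpM2l.
  have h3' : 0 <= 1 - x 0 s by rewrite subr_ge0.
  have h4 : 0 <= - q 0 t by rewrite oppr_ge0.
  have := mulr_ge0 (mulr_ge0 h2 h3') h4; nra.
move/negbT/forallPn: hnall => [u]; rewrite -ltNge => hu.
set p := fun t => if 0 <= q 0 t then q 0 t else 0.
have hp0 t : 0 <= p t by rewrite /p; case: ifP.
have hqp t : q 0 t <= p t by rewrite /p; case: ifP => // /negbT; rewrite -ltNge => /ltW.
have hg' t : g 0 t = if t \in S then p t else 0.
  by rewrite hg /p; case: (t \in S) => //=; case: ifP.
have [s hsS hs] : exists2 s, s \in S & 0 < q 0 s.
  case uS: (u \in S); first by exists u.
  have : (0 < #|S|)%N by rewrite hS.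
  rewrite card_gt0 => /set0Pn [s0 hs0]; exists s0 => //.
  apply: (lt_le_trans hu); apply: hSmax => //; by rewrite uS.
have gpos : 0 < dotv g g.
  rewrite /dotv (bigD1 s) //=.
  have e : g 0 s = q 0 s by rewrite hg hsS (ltW hs).
  apply: (@lt_le_trans _ _ (g 0 s * g 0 s)); first by rewrite e mulr_gt0.
  by rewrite lerDl; apply: sumr_ge0 => t _; rewrite -expr2 sqr_ge0.
set N := normv g.
have hN : 0 < N by rewrite /N /normv sqrtr_gt0.
have hN2 : N ^+ 2 = dotv g g by rewrite /N /normv sqr_sqrtr // ltW.
have dgq : dotv g q = dotv g g.
  apply: eq_bigr => t _; rewrite hg'; case: (t \in S); last by rewrite !mul0r.
  by rewrite /p; case: ifP => _; rewrite ?mul0r.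
have vq : dotv vopt q = N.
  rewrite /vopt dotvZl dgq -hN2 -/N; field; exact: lt0r_neq0.
have vv : dotv vopt vopt = 1.
  rewrite /vopt dotvZl dotvZr -hN2 -/N; field; exact: lt0r_neq0.
split.
  split; first by move=> t; rewrite mxE mulr_ge0 // ?invr_ge0 ?(ltW hN) // hg'; case: (t \in S).
  split; first by rewrite /normv vv sqrtr1.
  rewrite /cardv -hS; apply: subset_leq_card; apply/subsetP => t.
  by rewrite inE mxE hg'; case: (t \in S) => //; rewrite mulr0 eqxx.
move=> x [hx0 [hxn hxc]]; have d1 := normv_dot _ hxn.
rewrite vq.
set f := fun t => p t ^+ 2.
have [s0 hs0 hmin] := @arg_minP _ _ _ s (fun t => t \in S) f hsS.
set c := f s0.
have hc0 : 0 <= c by rewrite /c /f sqr_ge0.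
have hcS t : t \in S -> c <= f t by move=> ht; exact: hmin.
have hcn t : t \notin S -> f t <= c.
  move=> ht; have hq := hSmax _ _ hs0 ht.
  have hpp : p t <= p s0.
    by rewrite /p; case: (lerP 0 (q 0 t)) => h1; case: (lerP 0 (q 0 s0)) => h2; lra.
  by rewrite /c /f !expr2 ler_pM ?hp0.
set T := [set t | x 0 t != 0].
set y := fun t => if x 0 t != 0 then p t else 0.
have H1 : \sum_(t in T) (f t - c) <= \sum_(t in S) (f t - c).
  rewrite big_mkcond [X in _ <= X]big_mkcond /=; apply: ler_sum => t _.
  rewrite inE; case: (x 0 t != 0); case tS: (t \in S) => //.
  - by rewrite subr_le0 hcn // tS.
  - by rewrite subr_ge0 hcS.
rewrite !sumrB !sumr_const in H1.
have eY : \sum_t y t ^+ 2 = \sum_(t in T) f t.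
  rewrite [RHS]big_mkcond; apply: eq_bigr => t _; rewrite /y inE.
  by case: (x 0 t != 0); rewrite ?expr0n.
have eG : dotv g g = \sum_(t in S) f t.
  rewrite [RHS]big_mkcond; apply: eq_bigr => t _; rewrite hg' /f.
  by case: (t \in S); rewrite ?mul0r ?expr2.
have hTk : c *+ #|T| <= c *+ #|S|.
  rewrite -(mulr_natr c #|T|) -(mulr_natr c #|S|); apply: (ler_wpM2l hc0); rewrite ler_nat hS; exact: hxc.
have HY : \sum_t y t ^+ 2 <= N ^+ 2.
  rewrite hN2 eY eG; lra.
have Hmain : 2 * N * dotv x q <= N ^+ 2 * dotv x x + \sum_t y t ^+ 2.
  rewrite /dotv !mulr_sumr -big_split /=; apply: ler_sum => t _.
  have hxy : x 0 t * q 0 t <= x 0 t * y t.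
    rewrite /y; case: eqP => [->|_]; first by rewrite !mul0r.
    by rewrite ler_wpM2l.
  have hsq := sqr_ge0 (N * x 0 t - y t).
  have e : (N * x 0 t - y t) ^+ 2 = N ^+ 2 * (x 0 t * x 0 t) + y t ^+ 2 - 2 * N * (x 0 t * y t) by ring.
  rewrite e subr_ge0 in hsq.
  apply: le_trans hsq; rewrite ler_wpM2l //; apply: mulr_ge0 => //; exact: ltW.
rewrite d1 mulr1 in Hmain.
have h2 : N * dotv x q <= N * N by rewrite -expr2; lra.
by rewrite ler_pM2l in h2.
Qed.
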